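(* Let $x, a$ be positive real numbers and $k \geq 2$ an integer. Then \[ k\,\psi_{ak}(xk) > \psi_a(x), \] where $\psi_c(y) \coloneqq \psi(y+c)-\psi(y)$ for $c,y>0$.
   Context: $\psi=\Gamma'/\Gamma$ is the digamma function. *)

(* Defs.v *)
From Stdlib Require Import Reals.
From Coquelicot Require Import Coquelicot.
Open Scope R_scope.

Definition Gamma (x : R) : R :=
  RInt_gen (fun t => Rpower t (x - 1) * exp (- t))
           (at_right 0) (Rbar_locally p_infty).

Definition digamma (x : R) : R := Derive Gamma x / Gamma x.

Definition digamma_diff (c y : R) : R := digamma (y + c) - digamma y.

(* Main.v *)
Require Import Defs.
From Stdlib Require Import Reals.
From Coquelicot Require Import Coquelicot.
From Stdlib Require Import Lra Lia Classical.
Open Scope R_scope.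

Lemma exR (f : R -> R) a b : 0 < a -> a <= b -> (forall t, 0 < t -> continuous f t) -> ex_RInt f a b.
Proof.
  intros Ha Hab Hc. apply (@ex_RInt_continuous R_CompleteNormedModule). intros z Hz.
  apply Hc. rewrite Rmin_left in Hz by lra. lra.
Qed.

Lemma RInt_mono_int (f : R -> R) a b a' b' :
  (forall t, 0 < t -> continuous f t) -> (forall t, 0 < t -> 0 <= f t) ->
  0 < a' -> a' <= a -> a <= b -> b <= b' -> RInt f a b <= RInt f a' b'.
Proof.
  intros Hc Hp H1 H2 H3 H4.
  rewrite <- (RInt_Chasles f a' a b') by (apply exR; auto; lra).
  rewrite <- (RInt_Chasles f a b b') by (apply exR; auto; lra).
  assert (0 <= RInt f a' a). { apply RInt_ge_0; auto. apply exR; auto; lra. intros; apply Hp; lra. }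
  assert (0 <= RInt f b b'). { apply RInt_ge_0; auto. apply exR; auto; lra. intros; apply Hp; lra. }
  unfold plus; simpl. lra.
Qed.

Lemma improper_sup (f : R -> R) (M : R) :
 (forall t, 0 < t -> continuous f t) ->
 (forall t, 0 < t -> 0 <= f t) ->
 (forall a b, 0 < a -> a < b -> RInt f a b <= M) ->
 exists S, is_RInt_gen f (at_right 0) (Rbar_locally p_infty) S /\
   (forall a b, 0<a -> a<b -> RInt f a b <= S) /\
   (forall eps, 0<eps -> exists a0 b0, 0<a0 /\ a0<b0 /\
      forall a b, 0<a -> a<=a0 -> b0<=b -> S - eps < RInt f a b).
Proof.
  intros Hc Hp HM.
  set (E := fun r => exists a b, 0 < a /\ a < b /\ r = RInt f a b).
  destruct (completeness E) as [S [HS1 HS2]].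
  { exists M. intros r [a [b [? [? ->]]]]. apply HM; auto. }
  { exists (RInt f 1 2). exists 1, 2. repeat split; lra. }
  assert (Hub : forall a b, 0<a -> a<b -> RInt f a b <= S).
  { intros a b ? ?. apply HS1. exists a, b. auto. }
  assert (Happ : forall eps, 0<eps -> exists a0 b0, 0<a0 /\ a0<b0 /\
      forall a b, 0<a -> a<=a0 -> b0<=b -> S - eps < RInt f a b).
  { intros eps Heps.
    destruct (classic (exists a b, 0 < a /\ a < b /\ S - eps < RInt f a b)) as [[a0 [b0 [? [? ?]]]]|Hn].
    - exists a0, b0. repeat split; auto. intros a b ? ? ?.
      apply Rlt_le_trans with (RInt f a0 b0); auto.
      apply RInt_mono_int; auto; lra.
    - exfalso. assert (S <= S - eps); [|lra].
      apply HS2. intros r [a [b [? [? ->]]]].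
      destruct (Rle_lt_dec (RInt f a b) (S - eps)); auto.
      exfalso; apply Hn; exists a, b; auto. }
  exists S. split; [|split]; auto.
  intros P [eps HP]. simpl.
  destruct (Happ eps (cond_pos eps)) as [a0 [b0 [Ha0 [Hab0 Hap]]]].
  apply Filter_prod with (fun a => 0 < a <= a0) (fun b => b0 < b).
  - exists (mkposreal a0 Ha0). intros y Hy Hy0. split; auto.
    unfold ball in Hy; simpl in Hy. unfold AbsRing_ball, abs, minus, plus, opp in Hy; simpl in Hy.
    apply Rabs_def2 in Hy. lra.
  - exists b0. auto.
  - intros a b [Ha1 Ha2] Hb. simpl. exists (RInt f a b). split.
    + apply (@RInt_correct R_CompleteNormedModule). apply exR; auto; lra.
    + apply HP. unfold ball; simpl. unfold AbsRing_ball, abs, minus, plus, opp; simpl.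
      assert (S - eps < RInt f a b) by (apply Hap; lra).
      assert (RInt f a b <= S) by (apply Hub; lra).
      apply Rabs_def1; lra.
Qed.


Definition F (x t : R) := Rpower t (x-1) * exp (-t).

Lemma RInt_uniq (f : R -> R) a b l : is_RInt f a b l -> RInt f a b = l.
Proof. apply (@is_RInt_unique R_CompleteNormedModule). Qed.

Lemma cont_der (f : R -> R) t : ex_derive f t -> continuous f t.
Proof. apply (@ex_derive_continuous R_AbsRing R_NormedModule). Qed.

Lemma exp_le_mono a b : a <= b -> exp a <= exp b.
Proof. intros [H|H]. left; apply exp_increasing; auto. subst; lra. Qed.

Lemma ln_lt_id y : 0 < y -> ln y < y.
Proof.
  intros Hy. rewrite <- (ln_exp y) at 2. apply ln_increasing; auto.
  pose proof (exp_ineq1 y). lra.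
Qed.

Lemma ln_le_sqrt t : 1 <= t -> ln t <= 2 * sqrt t.
Proof.
  intros Ht. assert (Hs : 0 < sqrt t) by (apply sqrt_lt_R0; lra).
  rewrite <- (sqrt_sqrt t) at 1 by lra. rewrite ln_mult by auto.
  pose proof (ln_lt_id _ Hs). lra.
Qed.

Lemma F_cont x t : 0 < t -> continuous (F x) t.
Proof. intros. apply cont_der. unfold F, Rpower. auto_derive. auto. Qed.

Lemma F_pos x t : 0 < F x t.
Proof. unfold F, Rpower. apply Rmult_lt_0_compat; apply exp_pos. Qed.

Lemma F_bound_big x t : 0 < x -> 1 <= t -> F x t <= exp (2*x^2) * exp (-t/2).
Proof.
  intros Hx Ht. unfold F, Rpower. rewrite <- !exp_plus. apply exp_le_mono.
  pose proof (ln_le_sqrt t Ht).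
  assert (0 <= ln t) by (rewrite <- ln_1; apply ln_le; lra).
  assert (Hs : 0 <= sqrt t) by apply sqrt_pos.
  assert (Hss : sqrt t * sqrt t = t) by (apply sqrt_sqrt; lra).
  assert ((x-1) * ln t <= x * ln t) by nra.
  assert (x * ln t <= x * (2 * sqrt t)) by (apply Rmult_le_compat_l; lra).
  assert (0 <= (sqrt t - 2*x)^2) by (apply pow2_ge_0).
  nra.
Qed.

Lemma F_bound_small x t : 0 < t <= 1 -> F x t <= Rpower t (x-1).
Proof.
  intros Ht. unfold F. pose proof (exp_pos (-t)).
  assert (exp (-t) <= 1) by (rewrite <- exp_0; apply exp_le_mono; lra).
  assert (0 < Rpower t (x-1)) by (unfold Rpower; apply exp_pos). nra.
Qed.

Lemma RInt_pow_01 x a : 0 < x -> 0 < a <= 1 -> RInt (fun t => Rpower t (x-1)) a 1 <= 1/x.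
Proof.
  intros Hx Ha.
  assert (H : is_RInt (fun t => Rpower t (x-1)) a 1 (minus ((fun t => Rpower t x / x) 1) ((fun t => Rpower t x / x) a))).
  { apply (@is_RInt_derive R_CompleteNormedModule (fun t => Rpower t x / x) (fun t => Rpower t (x-1)) a 1).
    - intros t Ht. rewrite Rmin_left in Ht by lra. 
      unfold Rpower. auto_derive. lra.
      replace ((x-1) * ln t) with (x * ln t + - ln t) by ring.
      rewrite exp_plus, exp_Ropp, exp_ln by lra. field. lra.
    - intros t Ht. rewrite Rmin_left in Ht by lra. apply cont_der.
      unfold Rpower. auto_derive. lra. }
  apply RInt_uniq in H. rewrite H. unfold minus, plus, opp; simpl.
  unfold Rpower; rewrite ln_1, Rmult_0_r, exp_0. pose proof (exp_pos (x * ln a)).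
  unfold Rdiv. assert (0 < /x) by (apply Rinv_0_lt_compat; lra). nra.
Qed.

Lemma exR_any (f : R -> R) a b : (forall t, continuous f t) -> ex_RInt f a b.
Proof. intros Hc. apply (@ex_RInt_continuous R_CompleteNormedModule). intros; apply Hc. Qed.

Lemma RInt_expdecay C b : 0 < C -> 1 <= b -> RInt (fun t => C * exp (-t/2)) 1 b <= 2 * C.
Proof.
  intros HC Hb.
  assert (H : is_RInt (fun t => C * exp (-t/2)) 1 b (minus ((fun t => -2*C*exp(-t/2)) b) ((fun t => -2*C*exp(-t/2)) 1))).
  { apply (@is_RInt_derive R_CompleteNormedModule (fun t => -2*C*exp(-t/2)) (fun t => C * exp (-t/2)) 1 b).
    - intros t Ht. auto_derive; auto. unfold Rdiv; field.
    - intros t Ht. apply cont_der. auto_derive; auto. }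
  apply RInt_uniq in H. rewrite H. unfold minus, plus, opp; simpl.
  pose proof (exp_pos (-b/2)).
  assert (exp (-(1)/2) <= 1) by (rewrite <- exp_0 at 2; apply exp_le_mono; lra).
  nra.
Qed.

Lemma pow_cont x t : 0 < t -> continuous (fun t => Rpower t (x-1)) t.
Proof. intros. apply cont_der. unfold Rpower. auto_derive. auto. Qed.

Lemma F_RInt_bound x a b : 0 < x -> 0 < a -> a < b ->
  RInt (F x) a b <= 1/x + 2 * exp (2*x^2).
Proof.
  intros Hx Ha Hab.
  assert (Hc : forall t, 0 < t -> continuous (F x) t) by (intros; apply F_cont; auto).
  assert (Hp : forall t, 0 < t -> 0 <= F x t) by (intros; left; apply F_pos).
  apply Rle_trans with (RInt (F x) (Rmin a 1) (Rmax b 1)).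
  { apply RInt_mono_int; auto.
    - apply Rmin_glb_lt; lra.
    - apply Rmin_l.
    - lra.
    - apply Rmax_l. }
  assert (Ha1 : 0 < Rmin a 1 <= 1) by (split; [apply Rmin_glb_lt; lra| apply Rmin_r]).
  assert (Hb1 : 1 <= Rmax b 1) by apply Rmax_r.
  rewrite <- (RInt_Chasles (F x) (Rmin a 1) 1 (Rmax b 1)) by (apply exR; auto; lra).
  unfold plus; simpl.
  apply Rplus_le_compat.
  - apply Rle_trans with (RInt (fun t => Rpower t (x-1)) (Rmin a 1) 1).
    + apply RInt_le. lra. apply exR; auto; lra.
      apply exR; [lra|lra|]. intros; apply pow_cont; auto.
      intros t Ht. apply F_bound_small. lra.
    + apply RInt_pow_01; auto.
  - apply Rle_trans with (RInt (fun t => exp (2*x^2) * exp (-t/2)) 1 (Rmax b 1)).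
    + apply RInt_le. lra. apply exR; auto; lra.
      apply exR_any. intros; apply cont_der; auto_derive; auto.
      intros t Ht. replace (-t/2) with (-t*/2) by field. apply F_bound_big; lra.
    + apply RInt_expdecay; auto. apply exp_pos.
Qed.

Lemma Gamma_sup x : 0 < x ->
   (forall a b, 0<a -> a<b -> RInt (F x) a b <= Gamma x) /\
   (forall eps, 0<eps -> exists a0 b0, 0<a0 /\ a0<b0 /\
      forall a b, 0<a -> a<=a0 -> b0<=b -> Gamma x - eps < RInt (F x) a b).
Proof.
  intros Hx.
  destruct (improper_sup (F x) (1/x + 2 * exp (2*x^2))) as [S [HS [H1 H2]]].
  - intros; apply F_cont; auto.
  - intros; left; apply F_pos.
  - intros; apply F_RInt_bound; auto.
  - assert (E : Gamma x = S).
    { unfold Gamma. apply (is_RInt_gen_unique (V := R_CompleteNormedModule)). exact HS. }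
    rewrite E. auto.
Qed.


Lemma le_eps u v : (forall eps, 0 < eps -> u < v + eps) -> u <= v.
Proof.
  intros H. destruct (Rle_lt_dec u v); auto. specialize (H (u - v)). lra.
Qed.

Lemma Gamma_pos x : 0 < x -> 0 < Gamma x.
Proof.
  intros Hx. destruct (Gamma_sup x Hx) as [H1 _].
  apply Rlt_le_trans with (RInt (F x) 1 2); [|apply H1; lra].
  apply RInt_gt_0. lra. intros; apply F_pos. intros; apply F_cont; lra.
Qed.

Lemma RInt_lin (f g : R -> R) a b al be : ex_RInt f a b -> ex_RInt g a b ->
  RInt (fun t => al * f t + be * g t) a b = al * RInt f a b + be * RInt g a b.
Proof.
  intros Hf Hg.
  assert (H1 : ex_RInt (fun t => al * f t) a b) by (apply (@ex_RInt_scal R_CompleteNormedModule f a b al); auto).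
  assert (H2 : ex_RInt (fun t => be * g t) a b) by (apply (@ex_RInt_scal R_CompleteNormedModule g a b be); auto).
  pose proof (@RInt_plus R_CompleteNormedModule _ _ a b H1 H2) as E.
  pose proof (@RInt_scal R_CompleteNormedModule f a b al Hf) as E1.
  pose proof (@RInt_scal R_CompleteNormedModule g a b be Hg) as E2.
  simpl in *. unfold plus, scal in *; simpl in *. unfold mult in *; simpl in *.
  rewrite E. rewrite <- E1, <- E2. reflexivity.
Qed.

Lemma FE_RInt x a b : 0 < x -> 0 < a -> a < b ->
  RInt (F (x+1)) a b = Rpower a x * exp (-a) - Rpower b x * exp (-b) + x * RInt (F x) a b.
Proof.
  intros Hx Ha Hab.
  assert (H : is_RInt (fun t => 1 * F (x+1) t + (-x) * F x t) a b
     (minus ((fun t => - Rpower t x * exp (-t)) b) ((fun t => - Rpower t x * exp (-t)) a))).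
  { apply (@is_RInt_derive R_CompleteNormedModule (fun t => - Rpower t x * exp (-t))).
    - intros t Ht. rewrite Rmin_left, Rmax_right in Ht by lra.
      unfold F, Rpower. auto_derive. lra.
      replace (x+1-1) with x by ring.
      replace ((x-1) * ln t) with (x * ln t + - ln t) by ring.
      rewrite exp_plus, (exp_Ropp (ln t)), exp_ln by lra. field. lra.
    - intros t Ht. rewrite Rmin_left, Rmax_right in Ht by lra.
      apply cont_der. unfold F, Rpower. auto_derive. repeat split; lra. }
  apply RInt_uniq in H. rewrite RInt_lin in H by (apply exR; try lra; intros; apply F_cont; auto).
  unfold minus, plus, opp in H; simpl in H. lra.
Qed.

Lemma small_a x e : 0 < x -> 0 < e -> exists a1, 0 < a1 /\ forall a, 0 < a -> a <= a1 -> Rpower a x * exp (-a) < e.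
Proof.
  intros Hx He. exists (exp (ln e / x - 1)). split; [apply exp_pos|].
  intros a Ha Ha1.
  assert (ln a <= ln e / x - 1) by (rewrite <- (ln_exp (ln e / x - 1)); apply ln_le; auto).
  assert (x * ln a < ln e).
  { assert (x * ln a <= x * (ln e / x - 1)) by (apply Rmult_le_compat_l; lra).
    replace (x * (ln e / x - 1)) with (ln e - x) in H0 by (field; lra). lra. }
  unfold Rpower.
  assert (exp (-a) <= 1) by (rewrite <- exp_0; apply exp_le_mono; lra).
  assert (exp (x * ln a) < e) by (rewrite <- (exp_ln e) by auto; apply exp_increasing; auto).
  pose proof (exp_pos (x * ln a)). nra.
Qed.

Lemma large_b x e : 0 < x -> 0 < e -> exists b1, forall b, b1 <= b -> Rpower b x * exp (-b) < e.
Proof.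
  intros Hx He. set (C := exp (2*(x+1)^2)).
  assert (HC : 0 < C) by apply exp_pos.
  exists (Rmax 1 (-2 * ln (e / C) + 1)). intros b Hb.
  assert (Hb1 : 1 <= b) by (eapply Rle_trans; [apply Rmax_l|eauto]).
  assert (Hb2 : -2 * ln (e / C) + 1 <= b) by (eapply Rle_trans; [apply Rmax_r|eauto]).
  pose proof (F_bound_big (x+1) b ltac:(lra) Hb1) as HB. unfold F in HB.
  replace (x+1-1) with x in HB by ring. fold C in HB.
  eapply Rle_lt_trans; [exact HB|].
  assert (exp (-b/2) < e / C).
  { rewrite <- (exp_ln (e/C)) by (apply Rdiv_lt_0_compat; auto). apply exp_increasing. lra. }
  replace e with (C * (e / C)) by (field; lra).
  apply Rmult_lt_compat_l; auto.
Qed.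

Lemma Gamma_FE x : 0 < x -> Gamma (x+1) = x * Gamma x.
Proof.
  intros Hx.
  destruct (Gamma_sup x Hx) as [U1 A1].
  destruct (Gamma_sup (x+1) ltac:(lra)) as [U2 A2].
  apply Rle_antisym; apply le_eps; intros eps Heps.
  - destruct (A2 (eps/2) ltac:(lra)) as [a0 [b0 [Ha0 [Hab0 H0]]]].
    destruct (small_a x (eps/2) Hx ltac:(lra)) as [a1 [Ha1 H1]].
    set (a := Rmin a0 a1). set (b := Rmax b0 (a+1)).
    assert (Ha : 0 < a) by (apply Rmin_glb_lt; auto).
    assert (a <= a0) by apply Rmin_l. assert (a <= a1) by apply Rmin_r.
    assert (b0 <= b) by apply Rmax_l. assert (a + 1 <= b) by apply Rmax_r.
    specialize (H0 a b Ha ltac:(auto) ltac:(auto)).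
    specialize (H1 a Ha ltac:(auto)).
    rewrite FE_RInt in H0 by (auto; lra).
    assert (RInt (F x) a b <= Gamma x) by (apply U1; lra).
    assert (0 < Rpower b x * exp (-b)) by (unfold Rpower; apply Rmult_lt_0_compat; apply exp_pos).
    assert (x * RInt (F x) a b <= x * Gamma x) by (apply Rmult_le_compat_l; lra).
    lra.
  - destruct (A1 (eps/(2*x)) ltac:(apply Rdiv_lt_0_compat; lra)) as [a0 [b0 [Ha0 [Hab0 H0]]]].
    destruct (large_b x (eps/2) Hx ltac:(lra)) as [b1 H1].
    set (b := Rmax b0 (Rmax b1 (a0+1))).
    assert (b0 <= b) by apply Rmax_l.
    assert (b1 <= b) by (eapply Rle_trans; [apply Rmax_l|apply Rmax_r]).
    assert (a0 + 1 <= b) by (eapply Rle_trans; [apply Rmax_r|apply Rmax_r]).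
    specialize (H0 a0 b Ha0 ltac:(lra) ltac:(auto)).
    specialize (H1 b ltac:(auto)).
    assert (E := FE_RInt x a0 b Hx Ha0 ltac:(lra)).
    assert (RInt (F (x+1)) a0 b <= Gamma (x+1)) by (apply U2; lra).
    assert (0 < Rpower a0 x * exp (-a0)) by (unfold Rpower; apply Rmult_lt_0_compat; apply exp_pos).
    assert (x * (Gamma x - eps / (2 * x)) < x * RInt (F x) a0 b) by (apply Rmult_lt_compat_l; lra).
    replace (x * (Gamma x - eps / (2 * x))) with (x * Gamma x - eps/2) in H6 by (field; lra).
    lra.
Qed.


Lemma exp_ge_1plus y : 1 + y <= exp y.
Proof. destruct (Req_dec y 0). subst; rewrite exp_0; lra. left; apply exp_ineq1; auto. Qed.

Lemma exp_convex th u v : 0 <= th <= 1 -> exp (th*u + (1-th)*v) <= th * exp u + (1-th) * exp v.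
Proof.
  intros Hth. set (w := th*u + (1-th)*v).
  assert (Eu : exp u = exp w * exp (u - w)) by (rewrite <- exp_plus; f_equal; ring).
  assert (Ev : exp v = exp w * exp (v - w)) by (rewrite <- exp_plus; f_equal; ring).
  pose proof (exp_ge_1plus (u - w)). pose proof (exp_ge_1plus (v - w)).
  pose proof (exp_pos w).
  assert (exp w * (1 + (u-w)) <= exp u) by (rewrite Eu; apply Rmult_le_compat_l; lra).
  assert (exp w * (1 + (v-w)) <= exp v) by (rewrite Ev; apply Rmult_le_compat_l; lra).
  assert (th * (exp w * (1 + (u-w))) <= th * exp u) by (apply Rmult_le_compat_l; lra).
  assert ((1-th) * (exp w * (1 + (v-w))) <= (1-th) * exp v) by (apply Rmult_le_compat_l; lra).
  assert (th * (exp w * (1 + (u-w))) + (1-th) * (exp w * (1 + (v-w))) = exp w) by (unfold w; ring).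
  lra.
Qed.

Lemma Gamma_convex_s th p r s : 0 < th < 1 -> 0 < p -> 0 < r ->
  Gamma (th*p + (1-th)*r) <= th * exp ((1-th)*s) * Gamma p + (1-th) * exp (-th*s) * Gamma r.
Proof.
  intros Hth Hp Hr. set (m := th*p + (1-th)*r).
  assert (Hm : 0 < m) by (unfold m; nra).
  destruct (Gamma_sup m Hm) as [_ Am].
  destruct (Gamma_sup p Hp) as [Up _].
  destruct (Gamma_sup r Hr) as [Ur _].
  set (al := th * exp ((1-th)*s)). set (be := (1-th) * exp (-th*s)).
  assert (Hal : 0 < al) by (unfold al; pose proof (exp_pos ((1-th)*s)); nra).
  assert (Hbe : 0 < be) by (unfold be; pose proof (exp_pos (-th*s)); nra).
  apply le_eps. intros eps Heps.
  destruct (Am eps Heps) as [a0 [b0 [Ha0 [Hab0 H0]]]].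
  specialize (H0 a0 b0 Ha0 ltac:(lra) ltac:(lra)).
  assert (HI : RInt (F m) a0 b0 <= al * RInt (F p) a0 b0 + be * RInt (F r) a0 b0).
  { rewrite <- RInt_lin by (apply exR; try lra; intros; apply F_cont; auto).
    apply RInt_le. lra.
    apply exR; try lra; intros; apply F_cont; auto.
    apply (@ex_RInt_plus R_CompleteNormedModule (fun t => al * F p t) (fun t => be * F r t));
      apply (@ex_RInt_scal R_CompleteNormedModule); apply exR; try lra; intros; apply F_cont; auto.
    intros t Ht. unfold F, Rpower, al, be.
    rewrite <- !exp_plus.
    replace (th * exp ((1 - th) * s) * exp ((p - 1) * ln t + - t))
       with (th * exp ((p - 1) * ln t + - t + (1-th)*s)) by (rewrite (exp_plus _ ((1-th)*s)); ring).
    replace ((1 - th) * exp (- th * s) * exp ((r - 1) * ln t + - t))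
       with ((1 - th) * exp ((r - 1) * ln t + - t + - th*s)) by (rewrite (exp_plus _ (-th*s)); ring).
    replace ((m - 1) * ln t + - t) with (th * ((p - 1) * ln t + - t + (1-th)*s) + (1-th) * ((r - 1) * ln t + - t + - th*s)) by (unfold m; ring).
    apply exp_convex. lra. }
  assert (RInt (F p) a0 b0 <= Gamma p) by (apply Up; lra).
  assert (RInt (F r) a0 b0 <= Gamma r) by (apply Ur; lra).
  assert (al * RInt (F p) a0 b0 <= al * Gamma p) by (apply Rmult_le_compat_l; lra).
  assert (be * RInt (F r) a0 b0 <= be * Gamma r) by (apply Rmult_le_compat_l; lra).
  lra.
Qed.

Definition LG x := ln (Gamma x).

Lemma LG_convex th p r : 0 < th < 1 -> 0 < p -> 0 < r ->
  LG (th*p + (1-th)*r) <= th * LG p + (1-th) * LG r.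
Proof.
  intros Hth Hp Hr.
  pose proof (Gamma_convex_s th p r (LG r - LG p) Hth Hp Hr) as H.
  assert (Gp := Gamma_pos p Hp). assert (Gr := Gamma_pos r Hr).
  assert (Gm : 0 < Gamma (th*p + (1-th)*r)) by (apply Gamma_pos; nra).
  assert (Ep : Gamma p = exp (LG p)) by (unfold LG; rewrite exp_ln; auto).
  assert (Er : Gamma r = exp (LG r)) by (unfold LG; rewrite exp_ln; auto).
  rewrite Ep, Er in H.
  assert (E : th * exp ((1 - th) * (LG r - LG p)) * exp (LG p) +
     (1 - th) * exp (- th * (LG r - LG p)) * exp (LG r) = exp (th * LG p + (1-th) * LG r)).
  { rewrite Rmult_assoc, <- exp_plus. rewrite (Rmult_assoc (1-th)), <- exp_plus.
    replace ((1 - th) * (LG r - LG p) + LG p) with (th * LG p + (1-th) * LG r) by ring.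
    replace (- th * (LG r - LG p) + LG r) with (th * LG p + (1-th) * LG r) by ring.
    ring. }
  rewrite E in H.
  unfold LG at 1. rewrite <- (ln_exp (th * LG p + (1 - th) * LG r)).
  apply ln_le; auto.
Qed.


Fixpoint sumn (f : nat -> R) (N : nat) : R :=
  match N with O => 0 | S n => sumn f n + f n end.

Lemma LG_FE z : 0 < z -> LG (z+1) = LG z + ln z.
Proof.
  intros Hz. unfold LG. rewrite Gamma_FE by auto. rewrite ln_mult; auto. ring. apply Gamma_pos; auto.
Qed.

Lemma LG_shift y N : 0 < y -> LG (y + INR N) = LG y + sumn (fun j => ln (y + INR j)) N.
Proof.
  intros Hy. induction N as [|N IH]; cbn [sumn].
  - simpl INR. rewrite Rplus_0_r. ring.
  - rewrite S_INR. replace (y + (INR N + 1)) with ((y + INR N) + 1) by ring.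
    rewrite LG_FE. rewrite IH. ring. pose proof (pos_INR N). lra.
Qed.

Lemma three p q r : 0 < p -> p < q -> q < r -> (r-p) * LG q <= (r-q) * LG p + (q-p) * LG r.
Proof.
  intros Hp Hpq Hqr. set (th := (r-q)/(r-p)).
  assert (Hth : 0 < th < 1).
  { unfold th. split. apply Rdiv_lt_0_compat; lra.
    apply (Rmult_lt_reg_r (r-p)). lra. unfold Rdiv. rewrite Rmult_assoc, Rinv_l by lra. lra. }
  pose proof (LG_convex th p r Hth Hp ltac:(lra)) as H.
  replace (th * p + (1 - th) * r) with q in H by (unfold th; field; lra).
  apply (Rmult_le_compat_l (r-p)) in H; [|lra].
  replace ((r - p) * (th * LG p + (1 - th) * LG r)) with ((r-q) * LG p + (q-p) * LG r) in H
    by (unfold th; field; lra).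
  exact H.
Qed.

Lemma slope z h : 1 < z -> 0 < h <= 1 ->
  h * ln (z-1) <= LG (z+h) - LG z <= h * ln z.
Proof.
  intros Hz Hh.
  assert (E1 : LG (z+1) = LG z + ln z) by (apply LG_FE; lra).
  assert (E0 : LG z = LG (z-1) + ln (z-1)) by (replace z with ((z-1)+1) at 1 by ring; apply LG_FE; lra).
  split.
  - pose proof (three (z-1) z (z+h) ltac:(lra) ltac:(lra) ltac:(lra)) as H.
    replace (z + h - (z - 1)) with (1+h) in H by ring. replace (z+h-z) with h in H by ring.
    replace (z - (z-1)) with 1 in H by ring. nra.
  - destruct (Req_dec h 1) as [->|Hh1]. lra.
    pose proof (three z (z+h) (z+1) ltac:(lra) ltac:(lra) ltac:(lra)) as H.
    replace (z + 1 - z) with 1 in H by ring. replace (z+1-(z+h)) with (1-h) in H by ring.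
    replace (z + h - z) with h in H by ring. nra.
Qed.

Lemma slope_neg z u : 1 < z -> 0 < u <= 1 ->
  u * ln (z-1) <= LG z - LG (z-u) <= u * ln z.
Proof.
  intros Hz Hu.
  assert (E1 : LG (z+1) = LG z + ln z) by (apply LG_FE; lra).
  assert (E0 : LG z = LG (z-1) + ln (z-1)) by (replace z with ((z-1)+1) at 1 by ring; apply LG_FE; lra).
  split.
  - destruct (Req_dec u 1) as [->|Hu1]. lra.
    pose proof (three (z-1) (z-u) z ltac:(lra) ltac:(lra) ltac:(lra)) as H.
    replace (z - (z-1)) with 1 in H by ring. replace (z - (z-u)) with u in H by ring.
    replace (z - u - (z-1)) with (1-u) in H by ring. nra.
  - pose proof (three (z-u) z (z+1) ltac:(lra) ltac:(lra) ltac:(lra)) as H.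
    replace (z + 1 - (z-u)) with (1+u) in H by ring. replace (z+1-z) with 1 in H by ring.
    replace (z - (z - u)) with u in H by ring. nra.
Qed.

Lemma slope_all z h : 1 < z -> h <> 0 -> -1 <= h <= 1 ->
  ln (z-1) <= (LG (z+h) - LG z) / h <= ln z.
Proof.
  intros Hz Hh0 Hh.
  destruct (Rlt_le_dec 0 h).
  - pose proof (slope z h Hz ltac:(lra)) as [A B].
    split; [apply (Rmult_le_reg_r h) | apply (Rmult_le_reg_r h)]; auto;
    unfold Rdiv; rewrite Rmult_assoc, Rinv_l by lra; lra.
  - pose proof (slope_neg z (-h) Hz ltac:(lra)) as [A B].
    replace (z - - h) with (z + h) in A, B by ring.
    replace ((LG (z + h) - LG z) / h) with ((LG z - LG (z+h)) / (-h)) by (field; lra).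
    split; [apply (Rmult_le_reg_r (-h)) | apply (Rmult_le_reg_r (-h))]; try lra;
    unfold Rdiv; rewrite Rmult_assoc, Rinv_l by lra; lra.
Qed.


Definition pN x N := ln (x + INR N) - sumn (fun j => / (x + INR j)) N.

Lemma ln_le_sub1 w : 0 < w -> ln w <= w - 1.
Proof.
  intros Hw. rewrite <- (ln_exp (w-1)). apply ln_le; auto.
  pose proof (exp_ge_1plus (w-1)). lra.
Qed.

Lemma ln_step_upper y : 0 < y -> ln (y+1) - ln y <= / y.
Proof.
  intros Hy. rewrite <- ln_div by lra. eapply Rle_trans. apply ln_le_sub1.
  apply Rdiv_lt_0_compat; lra. right. field. lra.
Qed.

Lemma ln_step_lower y : 0 < y -> / (y+1) <= ln (y+1) - ln y.
Proof.
  intros Hy. assert (ln y - ln (y+1) <= - / (y+1)).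
  { rewrite <- ln_div by lra. eapply Rle_trans. apply ln_le_sub1.
    apply Rdiv_lt_0_compat; lra. right. field. lra. }
  lra.
Qed.

Lemma pN_S x N : pN x (S N) = pN x N + (ln (x + INR N + 1) - ln (x + INR N) - / (x + INR N)).
Proof. unfold pN. cbn [sumn]. rewrite S_INR. replace (x + (INR N + 1)) with (x + INR N + 1) by ring. ring. Qed.

Lemma pN_decr x N : 0 < x -> pN x (S N) <= pN x N.
Proof.
  intros Hx. rewrite pN_S. pose proof (pos_INR N).
  pose proof (ln_step_upper (x + INR N) ltac:(lra)). lra.
Qed.

Lemma pN_lb x N : 0 < x -> ln x - / x <= pN x N.
Proof.
  intros Hx. assert (forall M, ln x - / x + / (x + INR M) <= pN x M).
  { clear N. intros M. induction M as [|N IH].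
    - unfold pN. simpl INR. cbn [sumn]. rewrite Rplus_0_r. lra.
    - rewrite pN_S. pose proof (pos_INR N).
      pose proof (ln_step_lower (x + INR N) ltac:(lra)).
      rewrite S_INR. replace (x + (INR N + 1)) with (x + INR N + 1) by ring. lra. }
  specialize (H N). pose proof (pos_INR N).
  assert (0 < / (x + INR N)) by (apply Rinv_0_lt_compat; lra). lra.
Qed.

Lemma sum_der N x : 0 < x ->
  is_derive (fun y => sumn (fun j => ln (y + INR j)) N) x (sumn (fun j => / (x + INR j)) N).
Proof.
  intros Hx. induction N as [|N IH].
  - cbn [sumn]. apply (is_derive_const (K := R_AbsRing) (V := R_NormedModule)).
  - cbn [sumn].
    apply (is_derive_plus (K := R_AbsRing) (V := R_NormedModule) (fun y => sumn (fun j => ln (y + INR j)) N) (fun y => ln (y + INR N))); auto.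
    pose proof (pos_INR N). auto_derive. lra. field. lra.
Qed.

Lemma inv_small a e : 0 < e -> 3 / e < a -> / a < e / 3.
Proof.
  intros He Ha. assert (0 < 3/e) by (apply Rdiv_lt_0_compat; lra).
  replace (e/3) with (/ (3/e)) by (field; lra).
  apply Rinv_lt_contravar; auto. nra.
Qed.

Lemma LG_deriv x : 0 < x -> exists P, Un_cv (pN x) P /\ derivable_pt_lim LG x P.
Proof.
  intros Hx.
  assert (Hex : ex_finite_lim_seq (pN x)).
  { apply (ex_finite_lim_seq_decr _ (ln x - / x)). intros; apply pN_decr; auto. intros; apply pN_lb; auto. }
  pose proof (Lim_seq_correct' _ Hex) as HL.
  set (P := real (Lim_seq (pN x))) in *.
  assert (HU : Un_cv (pN x) P) by (apply is_lim_seq_Reals; auto).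
  exists P. split; auto.
  intros eps Heps.
  destruct (HU (eps/3) ltac:(lra)) as [N0 HN0].
  destruct (INR_unbounded (3/eps + 2)) as [N1 HN1].
  set (N := Nat.max N0 N1).
  assert (HN0' : Rabs (pN x N - P) < eps/3) by (apply HN0; unfold N; lia).
  assert (HN1' : INR N1 <= INR N) by (apply le_INR; unfold N; lia).
  set (z := x + INR N).
  assert (H3e : 0 < 3/eps) by (apply Rdiv_lt_0_compat; lra).
  assert (Hz : 1 < z) by (unfold z; lra).
  assert (Hzi : / (z - 1) < eps/3) by (apply inv_small; unfold z; lra).
  assert (Hzl : ln z - ln (z-1) <= / (z-1)).
  { pose proof (ln_step_upper (z-1) ltac:(lra)). replace (z-1+1) with z in H by ring. auto. }
  pose proof (sum_der N x Hx) as HS. apply is_derive_Reals in HS.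
  destruct (HS (eps/3) ltac:(lra)) as [d1 Hd1].
  assert (Hdp : 0 < Rmin d1 (Rmin x 1)) by (apply Rmin_glb_lt; [apply cond_pos|apply Rmin_glb_lt; lra]).
  exists (mkposreal _ Hdp). intros h Hh0 Hhd. simpl in Hhd.
  assert (Hh1 : Rabs h < d1) by (eapply Rlt_le_trans; [exact Hhd|apply Rmin_l]).
  assert (Hh2 : Rabs h < Rmin x 1) by (eapply Rlt_le_trans; [exact Hhd|apply Rmin_r]).
  assert (Hhx : Rabs h < x) by (eapply Rlt_le_trans; [exact Hh2|apply Rmin_l]).
  assert (Hh1' : Rabs h < 1) by (eapply Rlt_le_trans; [exact Hh2|apply Rmin_r]).
  apply Rabs_def2 in Hhx. apply Rabs_def2 in Hh1'.
  specialize (Hd1 h Hh0 Hh1).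
  set (S := fun y => sumn (fun j => ln (y + INR j)) N) in *.
  set (s := sumn (fun j => / (x + INR j)) N) in *.
  assert (E1 : LG (x + h + INR N) = LG (x+h) + S (x+h)) by (apply LG_shift; lra).
  assert (E2 : LG (x + INR N) = LG x + S x) by (apply LG_shift; lra).
  replace (x + h + INR N) with (z + h) in E1 by (unfold z; ring).
  fold z in E2.
  pose proof (slope_all z h Hz Hh0 ltac:(lra)) as [A1 A2].
  assert (ED : (LG (x+h) - LG x) / h = (LG (z+h) - LG z)/h - (S (x+h) - S x)/h).
  { rewrite E1, E2. field. auto. }
  rewrite ED.
  assert (Ep : pN x N = ln z - s) by reflexivity.
  rewrite Ep in HN0'.
  apply Rabs_def2 in HN0'. apply Rabs_def2 in Hd1.
  unfold S. apply Rabs_def1; lra.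
Qed.


Lemma digamma_cv x : 0 < x -> Un_cv (pN x) (digamma x).
Proof.
  intros Hx. destruct (LG_deriv x Hx) as [P [HU HD]].
  apply is_derive_Reals in HD.
  assert (HG : is_derive Gamma x (scal P (exp (LG x)))).
  { apply (is_derive_ext_loc (K := R_AbsRing) (V := R_NormedModule) (fun y => exp (LG y))).
    - exists (mkposreal x Hx). intros t Ht. unfold ball in Ht; simpl in Ht.
      unfold AbsRing_ball, abs, minus, plus, opp in Ht; simpl in Ht.
      apply Rabs_def2 in Ht. unfold LG. rewrite exp_ln; auto. apply Gamma_pos. lra.
    - apply (is_derive_comp (K := R_AbsRing) (V := R_NormedModule) exp LG x). apply is_derive_exp. auto. }
  apply is_derive_unique in HG.
  unfold digamma. rewrite HG. unfold scal; simpl; unfold mult; simpl.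
  unfold LG. rewrite exp_ln by (apply Gamma_pos; auto).
  replace (P * Gamma x / Gamma x) with P; auto. field. apply Rgt_not_eq, Gamma_pos; auto.
Qed.


Lemma sumn_ext f g N : (forall j, (j < N)%nat -> f j = g j) -> sumn f N = sumn g N.
Proof.
  induction N as [|N IH]; intros H; cbn [sumn]; auto.
  rewrite IH by (intros; apply H; lia). rewrite H by lia. auto.
Qed.

Lemma sumn_minus f g N : sumn f N - sumn g N = sumn (fun j => f j - g j) N.
Proof. induction N as [|N IH]; cbn [sumn]. ring. rewrite <- IH. ring. Qed.

Lemma sumn_scal c f N : c * sumn f N = sumn (fun j => c * f j) N.
Proof. induction N as [|N IH]; cbn [sumn]. ring. rewrite <- IH. ring. Qed.

Lemma sumn_add f m n : sumn f (m + n) = sumn f m + sumn (fun r => f (m + r)%nat) n.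
Proof.
  induction n as [|n IH]; cbn [sumn]. rewrite Nat.add_0_r. ring.
  rewrite Nat.add_succ_r. cbn [sumn]. rewrite IH. ring.
Qed.

Lemma sumn_nonneg f N : (forall j, 0 <= f j) -> 0 <= sumn f N.
Proof. intros H. induction N as [|N IH]; cbn [sumn]. lra. pose proof (H N). lra. Qed.

Lemma sumn_first f N : (forall j, 0 <= f j) -> f O <= sumn f (S N).
Proof.
  intros H. induction N as [|N IH]. cbn [sumn]. lra.
  cbn [sumn] in *. pose proof (H (S N)). lra.
Qed.

Lemma A_formula y c N : pN (y+c) N - pN y N =
  (ln (y+c+INR N) - ln (y+INR N)) + sumn (fun j => / (y + INR j) - / (y + c + INR j)) N.
Proof. unfold pN. rewrite <- sumn_minus. ring. Qed.

Definition g (x a u : R) := / (x + u) - / (x + a + u).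

Lemma g_form x a (Hx : 0 < x) (Ha : 0 < a) u : 0 <= u -> g x a u = a / ((x+u) * (x+a+u)).
Proof. intros. unfold g. field. lra. Qed.

Lemma g_pos x a (Hx : 0 < x) (Ha : 0 < a) u : 0 <= u -> 0 < g x a u.
Proof. intros. rewrite g_form by auto. apply Rdiv_lt_0_compat; auto. nra. Qed.

Lemma g_decr x a (Hx : 0 < x) (Ha : 0 < a) u v : 0 <= u -> u <= v -> g x a v <= g x a u.
Proof.
  intros Hu Huv. rewrite !g_form by lra. unfold Rdiv. apply Rmult_le_compat_l. lra.
  apply Rinv_le_contravar. nra. apply Rmult_le_compat; lra.
Qed.

Lemma block x a k N m : 0 < x -> 0 < a -> (1 <= m <= k)%nat ->
  g x a (INR N) + (INR m - 1) * g x a (INR N + 1) <=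
  sumn (fun r => g x a (INR N + INR r / INR k)) m.
Proof.
  intros Hx Ha Hm. induction m as [|m IH]. lia.
  destruct (Nat.eq_dec m 0) as [->|Hm0].
  - cbn [sumn]. simpl INR. unfold Rdiv. rewrite Rmult_0_l, !Rplus_0_r. lra.
  - cbn [sumn]. rewrite S_INR.
    assert (Hk : 0 < INR k) by (apply lt_0_INR; lia).
    assert (HmK : INR m / INR k <= 1).
    { apply (Rmult_le_reg_r (INR k)); auto. unfold Rdiv. rewrite Rmult_assoc, Rinv_l by lra.
      rewrite Rmult_1_l, Rmult_1_r. apply le_INR; lia. }
    assert (0 <= INR m / INR k) by (apply Rdiv_le_0_compat; [apply pos_INR|lra]).
    pose proof (g_decr x a Hx Ha (INR N + INR m / INR k) (INR N + 1) ltac:(pose proof (pos_INR N); lra) ltac:(lra)).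
    specialize (IH ltac:(lia)). lra.
Qed.

Lemma main_sum x a k N : 0 < x -> 0 < a -> (2 <= k)%nat ->
  sumn (fun n => g x a (INR n)) N + (INR k - 1) * sumn (fun n => g x a (INR n + 1)) N <=
  sumn (fun j => g x a (INR j / INR k)) (k * N).
Proof.
  intros Hx Ha Hk. induction N as [|N IH].
  - rewrite Nat.mul_0_r. cbn [sumn]. lra.
  - rewrite Nat.mul_succ_r, sumn_add. cbn [sumn].
    pose proof (block x a k N k Hx Ha ltac:(lia)) as B.
    assert (Hk0 : 0 < INR k) by (apply lt_0_INR; lia).
    rewrite (sumn_ext (fun r => g x a (INR (k * N + r) / INR k)) (fun r => g x a (INR N + INR r / INR k))).
    + lra.
    + intros j _. f_equal. rewrite plus_INR, mult_INR. field. lra.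
Qed.

Lemma per_N x a k N : 0 < x -> 0 < a -> (2 <= k)%nat -> (1 <= N)%nat ->
  (pN (x+a) N - pN x N) + (INR k - 1) * g x a 1 <=
  INR k * (pN (x * INR k + a * INR k) (k*N) - pN (x * INR k) (k*N)).
Proof.
  intros Hx Ha Hk HN. set (K := INR k).
  assert (HK : 2 <= K) by (unfold K; replace 2 with (INR 2) by (simpl; lra); apply le_INR; auto).
  rewrite !A_formula. rewrite mult_INR. fold K.
  pose proof (pos_INR N) as HN0.
  replace (x * K + a * K + K * INR N) with (K * (x + a + INR N)) by ring.
  replace (x * K + K * INR N) with (K * (x + INR N)) by ring.
  rewrite !ln_mult by lra.
  assert (Hl : 0 < ln (x + a + INR N) - ln (x + INR N)).
  { pose proof (ln_increasing (x + INR N) (x + a + INR N) ltac:(lra) ltac:(lra)). lra. }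
  rewrite Rmult_plus_distr_l.
  rewrite sumn_scal.
  rewrite (sumn_ext (fun j => K * (/ (x*K + INR j) - / (x*K + a*K + INR j))) (fun j => g x a (INR j / K))).
  2:{ intros j _. cbv beta. unfold g. pose proof (pos_INR j).
      assert (0 <= INR j / K) by (apply Rdiv_le_0_compat; lra).
      field. repeat split; try lra; nra. }
  pose proof (main_sum x a k N Hx Ha Hk) as MS. fold K in MS.
  rewrite (sumn_ext (fun j => / (x + INR j) - / (x + a + INR j)) (fun j => g x a (INR j))) by (intros; reflexivity).
  assert (g x a 1 <= sumn (fun n => g x a (INR n + 1)) N).
  { destruct N as [|N]. lia.
    replace (g x a 1) with ((fun n => g x a (INR n + 1)) O) by (simpl INR; f_equal; ring).
    apply (sumn_first (fun n => g x a (INR n + 1))). intros n; left; apply g_pos; auto; pose proof (pos_INR n); lra. }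
  assert ((K-1) * g x a 1 <= (K-1) * sumn (fun n => g x a (INR n + 1)) N) by (apply Rmult_le_compat_l; lra).
  assert (ln (x + a + INR N) - ln (x + INR N) <= K * (ln K + ln (x + a + INR N) - (ln K + ln (x + INR N)))) by nra.
  lra.
Qed.


Lemma cv_sub u l k : (1 <= k)%nat -> Un_cv u l -> Un_cv (fun N => u (k*N)%nat) l.
Proof.
  intros Hk H eps He. destruct (H eps He) as [N0 HN]. exists N0. intros n Hn.
  apply HN. unfold ge in *. nia.
Qed.

Lemma cv_scal u l c : Un_cv u l -> Un_cv (fun N => c * u N) (c * l).
Proof.
  intros H eps He.
  destruct (H (eps / (Rabs c + 1))) as [N0 HN].
  { apply Rdiv_lt_0_compat; auto. pose proof (Rabs_pos c); lra. }
  exists N0. intros n Hn. specialize (HN n Hn). unfold Rdist in *.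
  replace (c * u n - c * l) with (c * (u n - l)) by ring. rewrite Rabs_mult.
  pose proof (Rabs_pos c). pose proof (Rabs_pos (u n - l)).
  apply Rle_lt_trans with ((Rabs c + 1) * Rabs (u n - l)). nra.
  replace eps with ((Rabs c + 1) * (eps / (Rabs c + 1))) by (field; lra).
  apply Rmult_lt_compat_l; lra.
Qed.

Lemma cv_le u v l1 l2 c : Un_cv u l1 -> Un_cv v l2 ->
  (forall N, (1 <= N)%nat -> v N + c <= u N) -> l2 + c <= l1.
Proof.
  intros Hu Hv H. destruct (Rle_lt_dec (l2 + c) l1) as [|Hlt]; auto. exfalso.
  set (e := (l2 + c - l1) / 2).
  destruct (Hu e ltac:(unfold e; lra)) as [N1 H1].
  destruct (Hv e ltac:(unfold e; lra)) as [N2 H2].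
  set (N := S (Nat.max N1 N2)).
  specialize (H1 N ltac:(unfold N, ge; lia)). specialize (H2 N ltac:(unfold N, ge; lia)).
  specialize (H N ltac:(unfold N; lia)).
  unfold Rdist in *. apply Rabs_def2 in H1. apply Rabs_def2 in H2. unfold e in *. lra.
Qed.

Theorem lemma5p4 (x a : R) (k : nat) :
  0 < x -> 0 < a -> (2 <= k)%nat ->
  INR k * digamma_diff (a * INR k) (x * INR k) > digamma_diff a x.
Proof.
  intros Hx Ha Hk.
  assert (HK : 0 < INR k) by (apply lt_0_INR; lia).
  assert (HK2 : 2 <= INR k) by (replace 2 with (INR 2) by (simpl; lra); apply le_INR; auto).
  assert (Hu : Un_cv (fun N => INR k * (pN (x * INR k + a * INR k) (k*N) - pN (x * INR k) (k*N)))
                 (INR k * digamma_diff (a * INR k) (x * INR k))).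
  { apply cv_scal. unfold digamma_diff.
    apply (CV_minus (fun N => pN (x * INR k + a * INR k) (k*N)) (fun N => pN (x * INR k) (k*N))).
    - apply cv_sub. lia. apply digamma_cv. nra.
    - apply cv_sub. lia. apply digamma_cv. nra. }
  assert (Hv : Un_cv (fun N => pN (x + a) N - pN x N) (digamma_diff a x)).
  { unfold digamma_diff. apply CV_minus; apply digamma_cv; lra. }
  pose proof (cv_le _ _ _ _ ((INR k - 1) * g x a 1) Hu Hv) as H.
  assert (0 < g x a 1) by (apply g_pos; lra).
  assert (0 < (INR k - 1) * g x a 1) by (apply Rmult_lt_0_compat; lra).
  assert (digamma_diff a x + (INR k - 1) * g x a 1 <= INR k * digamma_diff (a * INR k) (x * INR k)).
  { apply H. intros N HN. apply per_N; auto. }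
  lra.
Qed.
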